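(* Let $V=[n]$, let $\mathbb V=\{V_1,\dots,V_k\}$ be a partition of $V$ into nonempty classes, let $d:\mathbb V\to\mathbb N$, and let $D^*=(d_{ij})$ be a symmetric $k\times k$ matrix with entries in $\mathbb N\cup\{*\}$. If $\langle\mathbb V,d,D^*\rangle\neq\emptyset$, then there exists a balanced $\langle\mathbb V,d,D^*\rangle$ graph.
   Context: $\mathbb N$ denotes the nonnegative integers. $\langle\mathbb V,d,D^*\rangle$ is the set of simple graphs $G$ on $V$ such that every vertex of $V_i$ has degree $d(V_i)$, and for every pair $i\le j$ with $d_{ij}\neq *$, the number of edges of $G$ between $V_i$ and $V_j$ (with both endpoints in $V_i$ if $i=j$) is exactly $d_{ij}$; pairs with $d_{ij}=*$ are unconstrained. For $G\in\langle\mathbb V,d,D^*\rangle$ let $H$ be the spanning subgraph of $G$ consisting of the edges $uv$ of $G$ with $u\in V_i$, $v\in V_j$ and $d_{ij}\neq *$. $G$ is a balanced $\langle\mathbb V,d,D^*\rangle$ graph if $H$ satisfies the balanced degree invariant: for every $i$, $\max_{v\in V_i}\deg_H(v)-\min_{v\in V_i}\deg_H(v)\le 1$. *)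

(* Defs.v *)
From mathcomp Require Import all_boot.
Set Implicit Arguments. Unset Strict Implicit. Unset Printing Implicit Defensive.

(* The partition V = V_1 ∪ ... ∪ V_k into
   nonempty classes is given by a surjective class map cls : 'I_n -> 'I_k
   (V_i = cls^-1(i)).  The matrix D^*
   has entries in option nat, with None standing for '*'. *)

Definition simple_graph n (e : rel 'I_n) : Prop :=
  irreflexive e /\ symmetric e.

Definition deg n (e : rel 'I_n) (v : 'I_n) : nat := #|[set u | e v u]|.

Definition edges_between n k (cls : 'I_n -> 'I_k) (e : rel 'I_n) (i j : 'I_k) : nat :=
  #|[set p : 'I_n * 'I_n | [&& p.1 < p.2, e p.1 p.2 &
       ((cls p.1 == i) && (cls p.2 == j)) || ((cls p.1 == j) && (cls p.2 == i))]]|.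

Definition in_VdD n k (cls : 'I_n -> 'I_k) (d : 'I_k -> nat)
    (D : 'I_k -> 'I_k -> option nat) (e : rel 'I_n) : Prop :=
  simple_graph e /\
  (forall v : 'I_n, deg e v = d (cls v)) /\
  (forall i j : 'I_k, i <= j -> forall m, D i j = Some m -> edges_between cls e i j = m).

Definition H_rel n k (cls : 'I_n -> 'I_k) (D : 'I_k -> 'I_k -> option nat)
    (e : rel 'I_n) : rel 'I_n :=
  fun u v => e u v && (D (cls u) (cls v) != None).

Definition balanced_VdD n k (cls : 'I_n -> 'I_k) (d : 'I_k -> nat)
    (D : 'I_k -> 'I_k -> option nat) (e : rel 'I_n) : Prop :=
  in_VdD cls d D e /\
  (forall u v : 'I_n, cls u = cls v ->
     deg (H_rel cls D e) u <= (deg (H_rel cls D e) v).+1).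

(* Main.v *)
Require Import Defs.
From mathcomp Require Import all_boot zify.
Set Implicit Arguments. Unset Strict Implicit. Unset Printing Implicit Defensive.

Lemma card_sum (T : finType) (P : pred T) : #|[set z | P z]| = \sum_z (P z : nat).
Proof. rewrite -sum1_card big_mkcond /=; apply: eq_bigr => z _; rewrite inE; by case: (P z). Qed.

Lemma sum_pw (T: finType) (F1 G1 F2 G2 : T -> nat) :
  (forall z, F1 z + G1 z = F2 z + G2 z) ->
  \sum_z F1 z + \sum_z G1 z = \sum_z F2 z + \sum_z G2 z.
Proof. move=> H; rewrite -!big_split /=; apply: eq_bigr => z _; exact: H. Qed.

Lemma sum_eq1 (T : finType) (c : T) (K : bool) : \sum_z ((z == c) && K : nat) = K.
Proof. rewrite (bigD1 c) //= eqxx big1 ?addn0 // => z /negbTE -> //. Qed.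

Definition sym n (p q : 'I_n) : rel 'I_n :=
  fun a b => ((a == p) && (b == q)) || ((a == q) && (b == p)).

Lemma deg_sym n (p q a : 'I_n) : p != q -> deg (sym p q) a = (a == p) + (a == q).
Proof.
move=> pq; rewrite /deg card_sum.
have E : forall b, (sym p q a b : nat) = ((b==q) && (a==p)) + ((b==p) && (a==q)).
  move=> b; rewrite /sym.
  have [->|ap] := eqVneq a p; first by rewrite eq_sym (negbTE pq) /= !andbF orbF addn0 andbT.
  rewrite /= andbF add0n; by case: (_ == _); case: (_ == _).
rewrite (eq_bigr _ (fun b _ => E b)) big_split /= !sum_eq1 //.
Qed.

Lemma count_sym n k (cls : 'I_n -> 'I_k) (C : 'I_k -> 'I_k -> bool) (p q : 'I_n) :
  p != q -> (forall a b, C a b = C b a) ->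
  \sum_(z : 'I_n * 'I_n) (sym p q z.1 z.2 && ((z.1 < z.2) && C (cls z.1) (cls z.2)) : nat)
  = C (cls p) (cls q).
Proof.
move=> pq Cs.
have E : forall z : 'I_n * 'I_n, (sym p q z.1 z.2 && ((z.1 < z.2) && C (cls z.1) (cls z.2)) : nat)
   = ((z == (p,q)) && ((p < q) && C (cls p) (cls q))) + ((z == (q,p)) && ((q < p) && C (cls q) (cls p))).
  case=> a b /=; rewrite /sym !xpair_eqE.
  have [->|ap] := eqVneq a p.
    rewrite (negbTE pq) /= addn0; by have [->|] := eqVneq b q.
  rewrite /= add0n; have [->|] := eqVneq a q => //=; by have [->|] := eqVneq b p.
rewrite (eq_bigr _ (fun z _ => E z)) big_split /= !sum_eq1 (Cs (cls q)).
have: (p < q) || (q < p) by rewrite -neq_ltn.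
by case: ltngtP => //; case: (C _ _).
Qed.

Lemma bool_key (e' e s1 s2 K : bool) : e' = (e && ~~ s1) || s2 -> (s1 -> e) -> (s2 -> ~~ e) ->
  (e' && K) + (s1 && K) = (e && K) + (s2 && K).
Proof. move=> ->; case: e; case: s1; case: s2; case: K => //=; try (by move=> /(_ isT)); by move=> _ /(_ isT). Qed.

Lemma sym_disj n (p q r t a b : 'I_n) : p != r -> p != t -> sym p q a b -> sym r t a b -> False.
Proof.
rewrite /sym => pr pt /orP[]/andP[/eqP-> /eqP->] /orP[]/andP[/eqP E1 /eqP E2]; subst;
  first [by rewrite eqxx in pr | by rewrite eqxx in pt].
Qed.

Lemma sym_sym n (p q a b : 'I_n) : sym p q a b = sym p q b a.
Proof. by rewrite /sym orbC andbC [X in _ || X]andbC. Qed.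

Lemma orb_nat (b1 b2 : bool) : ~~ (b1 && b2) -> ((b1 || b2) : nat) = b1 + b2.
Proof. by case: b1; case: b2. Qed.

Lemma sym_D n k (cls : 'I_n -> 'I_k) (D : 'I_k -> 'I_k -> option nat) (p q a b : 'I_n) :
  (forall i j, D i j = D j i) -> sym p q a b -> D (cls a) (cls b) = D (cls p) (cls q).
Proof. by move=> Ds /orP[]/andP[/eqP-> /eqP->]. Qed.

Definition degH n k (cls : 'I_n -> 'I_k) (D : 'I_k -> 'I_k -> option nat) (e : rel 'I_n) a :=
  deg (H_rel cls D e) a.

Lemma swap n k (cls : 'I_n -> 'I_k) (d : 'I_k -> nat) (D : 'I_k -> 'I_k -> option nat)
   (e : rel 'I_n) (u v w x : 'I_n) :
 (forall i j, D i j = D j i) -> in_VdD cls d D e ->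
 cls u = cls v -> u != v ->
 e u w -> D (cls u) (cls w) != None -> ~~ e v w -> w != v ->
 e v x -> D (cls v) (cls x) == None -> ~~ e u x -> x != u ->
 exists e', in_VdD cls d D e' /\
   (forall a, a != u -> a != v -> degH cls D e' a = degH cls D e a) /\
   degH cls D e' u + 1 = degH cls D e u /\ degH cls D e' v = degH cls D e v + 1.
Proof.
move=> Ds [[eirr esy] [edeg eedg]] cuv uv euw Duw evw wv evx Dvx eux xu.
have uw : u != w by apply/eqP => E; rewrite E eirr in euw.
have vx : v != x by apply/eqP => E; rewrite E eirr in evx.
have wx : w != x by apply/eqP => E; rewrite E cuv (eqP Dvx) in Duw.
have es : forall a b, e a b = e b a := esy.
pose s1 := fun a b => sym u w a b || sym v x a b.
pose s2 := fun a b => sym v w a b || sym u x a b.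
pose e' := fun a b => (e a b && ~~ s1 a b) || s2 a b.
have s1e : forall a b, s1 a b -> e a b.
  move=> a b /orP[]/orP[]/andP[/eqP-> /eqP->] //; by rewrite es.
have s2e : forall a b, s2 a b -> ~~ e a b.
  move=> a b /orP[]/orP[]/andP[/eqP-> /eqP->] //; by rewrite es.
have key : forall a b K, (e' a b && K) + (s1 a b && K) = (e a b && K) + (s2 a b && K).
  move=> a b K; apply: bool_key => //; [exact: s1e | exact: s2e].
have s1n : forall a b, (s1 a b : nat) = sym u w a b + sym v x a b.
  move=> a b; apply: orb_nat; apply/negP => /andP[h1 h2]; by apply: (sym_disj uv _ h1 h2); rewrite eq_sym.
have s2n : forall a b, (s2 a b : nat) = sym v w a b + sym u x a b.
  move=> a b; apply: orb_nat; apply/negP => /andP[h1 h2].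
  by apply: (sym_disj _ _ h1 h2); [rewrite eq_sym | ].
have ux : u != x by rewrite eq_sym.
have vw : v != w by rewrite eq_sym.
have vu : v != u by rewrite eq_sym.
have degE : forall a, deg e' a = deg e a.
  move=> a.
  have H1 : deg e' a + deg s1 a = deg e a + deg s2 a.
    rewrite /deg !card_sum; apply: sum_pw => b; have := key a b true; by rewrite !andbT.
  have H2 : deg s1 a = deg s2 a.
    have -> : deg s1 a = deg (sym u w) a + deg (sym v x) a.
      by rewrite /deg !card_sum -big_split; apply: eq_bigr => b _; exact: s1n.
    have -> : deg s2 a = deg (sym v w) a + deg (sym u x) a.
      by rewrite /deg !card_sum -big_split; apply: eq_bigr => b _; exact: s2n.
    rewrite !deg_sym //; move: (a == u : nat) (a == w : nat) (a == v : nat) (a == x : nat) => p q r t.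
    clear -p q r t; lia.
  by move: H1; rewrite H2; move/addIn.
have sD1 : forall a b, (s1 a b && (D (cls a) (cls b) != None)) = sym u w a b.
  move=> a b; rewrite /s1; case h1: (sym u w a b) => /=.
    by rewrite (@sym_D _ _ cls D _ _ _ _ Ds h1).
  case h2: (sym v x a b) => //=; by rewrite (@sym_D _ _ cls D _ _ _ _ Ds h2) (eqP Dvx).
have sD2 : forall a b, (s2 a b && (D (cls a) (cls b) != None)) = sym v w a b.
  move=> a b; rewrite /s2; case h1: (sym v w a b) => /=.
    by rewrite (@sym_D _ _ cls D _ _ _ _ Ds h1) -cuv.
  case h2: (sym u x a b) => //=; by rewrite (@sym_D _ _ cls D _ _ _ _ Ds h2) cuv (eqP Dvx).
have degHE : forall a, degH cls D e' a + ((a==u)+(a==w)) = degH cls D e a + ((a==v)+(a==w)).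
  move=> a; rewrite /degH -(deg_sym a uw) -(deg_sym a vw).
  rewrite /deg !card_sum; apply: sum_pw => b; rewrite /H_rel -(sD1 a b) -(sD2 a b); exact: key.
have edgE : forall i j, edges_between cls e' i j = edges_between cls e i j.
  move=> i j.
  pose C := fun a b : 'I_k => ((a == i) && (b == j)) || ((a == j) && (b == i)).
  have Cs : forall a b, C a b = C b a by move=> a b; rewrite /C orbC; congr (_ || _); apply: andbC.
  have cnt : forall r : rel 'I_n, edges_between cls r i j =
      \sum_(z : 'I_n * 'I_n) (r z.1 z.2 && ((z.1 < z.2) && C (cls z.1) (cls z.2)) : nat).
    move=> r; rewrite /edges_between card_sum; apply: eq_bigr => z _.
    by case: (r _ _); case: (_ < _).
  rewrite !cnt.
  have H1 := sum_pw (fun z : 'I_n * 'I_n => key z.1 z.2 ((z.1 < z.2) && C (cls z.1) (cls z.2))).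
  have E1 : \sum_(z : 'I_n * 'I_n) (s1 z.1 z.2 && ((z.1 < z.2) && C (cls z.1) (cls z.2)) : nat)
     = C (cls u) (cls w) + C (cls v) (cls x).
    rewrite -(count_sym cls uw Cs) -(count_sym cls vx Cs) -big_split; apply: eq_bigr => z _.
    move: ((z.1 < z.2) && C (cls z.1) (cls z.2)) => K; case: K; rewrite ?andbT ?andbF //=; exact: s1n.
  have E2 : \sum_(z : 'I_n * 'I_n) (s2 z.1 z.2 && ((z.1 < z.2) && C (cls z.1) (cls z.2)) : nat)
     = C (cls v) (cls w) + C (cls u) (cls x).
    rewrite -(count_sym cls vw Cs) -(count_sym cls ux Cs) -big_split; apply: eq_bigr => z _.
    move: ((z.1 < z.2) && C (cls z.1) (cls z.2)) => K; case: K; rewrite ?andbT ?andbF //=; exact: s2n.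
  rewrite E1 E2 cuv in H1; exact: addIn H1.
have sym_irr : forall p q a : 'I_n, p != q -> sym p q a a = false.
  move=> p q a pq; rewrite /sym andbC orbb; apply/negP => /andP[/eqP E /eqP F].
  by rewrite -E F eqxx in pq.
exists e'; split; [split; [split|split] | split; [|split]].
- by move=> a; rewrite /e' eirr /s2 !sym_irr.
- move=> a b; rewrite /e' es /s1 /s2 (sym_sym u w) (sym_sym v x) (sym_sym v w) (sym_sym u x) //.
- by move=> a; rewrite degE edeg.
- by move=> i j ij m Dm; rewrite edgE; exact: eedg.
- move=> a au av; have := degHE a; rewrite (negbTE au) (negbTE av) /= !add0n; exact: addIn.
- have := degHE u; rewrite eqxx (negbTE uv).
  move: (degH cls D e' u) (degH cls D e u) (u == w : nat) => p q t; clear -p q t; lia.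
- have := degHE v; rewrite eqxx (negbTE vu).
  move: (degH cls D e' v) (degH cls D e v) (v == w : nat) => p q t; clear -p q t; lia.
Qed.

Lemma pick_nb n (r1 r2 : rel 'I_n) a b : (deg r2 b).+1 < deg r1 a ->
  exists w, [&& r1 a w, ~~ r2 b w & w != b].
Proof.
move=> lt; case: (pickP (fun w => [&& r1 a w, ~~ r2 b w & w != b])) => [w h|none]; first by exists w.
have sub : [set w | r1 a w] \subset b |: [set w | r2 b w].
  apply/subsetP => w; rewrite !inE => h; have := none w; rewrite /= h /=.
  case: (eqVneq w b) => [->|wb]; by rewrite ?eqxx //= andbT => /negbFE.
have := subset_leq_card sub; rewrite cardsU1.
have := leq_b1 (b \notin [set w | r2 b w]). rewrite /deg in lt.
move: (b \notin _ : nat) => c h1 h2; exfalso.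
move: (#|[set w | r1 a w]|) (#|[set w | r2 b w]|) lt h1 h2 => p q; clear; lia.
Qed.

Lemma sum2 n (f : 'I_n -> nat) (u v : 'I_n) : u != v ->
  \sum_a f a = f u + f v + \sum_(a | (a != u) && (a != v)) f a.
Proof.
move=> uv; rewrite (bigD1 u) //= (bigD1 v) //=; first by rewrite addnA. by rewrite eq_sym.
Qed.

Lemma sq_lt n (f g : 'I_n -> nat) (u v : 'I_n) : u != v ->
  (forall a, a != u -> a != v -> f a = g a) -> f u + 1 = g u -> f v = g v + 1 -> g v + 2 <= g u ->
  \sum_a f a ^ 2 < \sum_a g a ^ 2.
Proof.
move=> uv E fu fv gl.
rewrite (sum2 (fun a => f a ^ 2) uv) (sum2 (fun a => g a ^ 2) uv).
rewrite (eq_bigr (fun a => g a ^ 2)); last by move=> a /andP[au av]; rewrite E.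
move: (\sum_(i | _) _) => S.
move: (f u) (g u) (f v) (g v) fu fv gl => p q r t; clear; nia.
Qed.

Definition pot n k (cls : 'I_n -> 'I_k) (D : 'I_k -> 'I_k -> option nat) (e : rel 'I_n) :=
  \sum_a degH cls D e a ^ 2.

Lemma step n k (cls : 'I_n -> 'I_k) (d : 'I_k -> nat) (D : 'I_k -> 'I_k -> option nat)
   (e : rel 'I_n) : (forall i j, D i j = D j i) -> in_VdD cls d D e ->
  balanced_VdD cls d D e \/ exists e', in_VdD cls d D e' /\ pot cls D e' < pot cls D e.
Proof.
move=> Ds he.
case: (boolP [forall u, forall v, (cls u == cls v) ==> (degH cls D e u <= (degH cls D e v).+1)]).
  move/forallP => H; left; split => // u v cuv.
  by have := H u; move/forallP/(_ v)/implyP; apply; rewrite cuv.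
move/forallPn => [u /forallPn [v]]; rewrite negb_imply => /andP[/eqP cuv]; rewrite -ltnNge => lt.
right.
have uv : u != v by apply/eqP => uv0; move: lt; rewrite uv0 ltnNge leqnSn.
have [w /and3P[/andP[euw Duw] nHvw wv]] := pick_nb lt.
have evw : ~~ e v w by apply/negP => evw; move: nHvw; rewrite /H_rel evw /= -cuv Duw.
pose star := fun a b => e a b && (D (cls a) (cls b) == None).
have split : forall a, deg e a = deg (H_rel cls D e) a + deg star a.
  move=> a; rewrite /deg !card_sum -big_split; apply: eq_bigr => b _; rewrite /H_rel /star.
  by case: (e a b); case: (D _ _ == None).
have lt2 : (deg star u).+1 < deg star v.
  have := split u; have := split v; case: he => _ [hd _]; rewrite !hd cuv.
  rewrite /degH in lt.
  move: (deg (H_rel cls D e) u) (deg (H_rel cls D e) v) (deg star u) (deg star v) (d (cls v)) lt.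
  move=> p q r t s; clear; lia.
have [x /and3P[/andP[evx Dvx] nsux xu]] := pick_nb lt2.
have eux : ~~ e u x by apply/negP => eux; move: nsux; rewrite /star eux /= cuv Dvx.
have [e' [he' [E1 [E2 E3]]]] := swap Ds he cuv uv euw Duw evw wv evx Dvx eux xu.
exists e'; split => //; apply: sq_lt uv E1 E2 E3 _; by rewrite addn2.
Qed.

Theorem lemma1 (n k : nat) (cls : 'I_n -> 'I_k) (d : 'I_k -> nat)
    (D : 'I_k -> 'I_k -> option nat) :
  (forall i : 'I_k, exists v : 'I_n, cls v = i) ->
  (forall i j : 'I_k, D i j = D j i) ->
  (exists e : rel 'I_n, in_VdD cls d D e) ->
  exists e : rel 'I_n, balanced_VdD cls d D e.
Proof.
move=> _ Ds [e0 he0].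
suff: forall m e, in_VdD cls d D e -> pot cls D e <= m -> exists e, balanced_VdD cls d D e.
  by move/(_ _ e0 he0 (leqnn _)).
elim=> [|m IH] e he hp; case: (step Ds he) => [hb|[e' [he' lt]]]; try by exists e.
  by move: (leq_trans lt hp).
by apply: (IH e' he'); rewrite -ltnS (leq_trans lt hp).
Qed.
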